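(* Consider any sequences generated by Algorithm 3 with parameters satisfying $0<\alpha\le\mu/2$ and $\eta\le\frac1{4\tau L}$, and let $\delta:=\min\{1,\frac1{2\eta L}\}$. Then for every $k\ge0$, \[ \frac1\eta\|x^{k+1}-x^*\|^2 \le \frac1\eta\|x^k-x^*\|^2 - \frac{3\alpha}4\|x^{k+1}-x^*\|^2 + \frac{2(1-\tau)}\tau\mathrm{D}_r(x_f^k,x^* ) - \frac{2-\tau}\tau\mathrm{D}_r(x_f^{k+1},x^* ) - \frac{\eta\delta}4\|y^{k+1}-y^*\|^2 + 2\langle y^{k+1}-y^*,x^{k+1}-x^*\rangle. \]
   Context: $F:\mathbb{R}^{nd}\to\mathbb{R}$ is differentiable, $\mu$-strongly convex and $L$-smooth, $0<\mu\le L$. $\mathbf{W}$ is a symmetric positive semidefinite $nd\times nd$ matrix whose kernel is the consensus space $\{(x_1,\dots,x_n)\in(\mathbb{R}^d)^n:x_1=\dots=x_n\}$. $x^*$ is the unique minimizer of $F$ over $\ker(\mathbf{W})$; $y^*:=\nabla F(x^* )-\frac\mu2x^*$, $z^*:=-\nabla F(x^* )$. $r(x):=F(x)-\frac\mu4\|x\|^2$, $h(y,z):=\frac1\mu\|y+z\|^2+\frac\nu2\|y\|^2$. $\mathrm{D}_r(u,v):=r(u)-r(v)-\langle\nabla r(v),u-v\rangle$. Algorithm 3: given $x^0,y^0\in\mathbb{R}^{nd}$, $z^0\in\mathrm{range}(\mathbf{W})$, parameters $\eta,\theta,\lambda,\alpha,\beta,\gamma,\nu>0$, $\tau,\sigma\in(0,1)$,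 set $x_f^0=x^0$, $y_f^0=y^0$, $z_f^0=z^0$, and for $k\ge0$: $x_g^k=\tau x^k+(1-\tau)x_f^k$, $y_g^k=\sigma y^k+(1-\sigma)y_f^k$, $z_g^k=\sigma z^k+(1-\sigma)z_f^k$; $(x^{k+1},y^{k+1})$ satisfies $x^{k+1} = x^k + \eta\alpha(x_g^k-x^{k+1}) - \eta\nabla r(x_g^k) + \eta y^{k+1}$ and $y^{k+1} = y^k + \theta\beta(y_g^k - y^{k+1}) - \theta\nabla_y h(y_g^k,z_g^k) + \theta\nu y^{k+1} - \theta x^{k+1}$; $z^{k+1} = z^k + \lambda\gamma(z_g^k - z^{k+1}) - \lambda\mathbf{W}\nabla_z h(y_g^k,z_g^k)$; $x_f^{k+1}=x_g^k+\frac{2\tau}{2-\tau}(x^{k+1}-x^k)$, $y_f^{k+1}=y_g^k+\sigma(y^{k+1}-y^k)$, $z_f^{k+1}=z_g^k+\sigma(z^{k+1}-z^k)$. *)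

(* Defs.v *)
From HB Require Import structures.
From mathcomp Require Import all_boot all_order all_algebra.
From mathcomp Require Import all_classical all_reals all_analysis.
Set Implicit Arguments. Unset Strict Implicit. Unset Printing Implicit Defensive.
Import Order.TTheory GRing.Theory Num.Theory.
Import numFieldNormedType.Exports.
Local Open Scope ring_scope.

(* Vectors of R^{nd} are column vectors 'cV[R]_(n * d); the block
   x = (x_1, ..., x_n) with x_i in R^d has (x_i)_j = x (mxvec_index i j) 0. *)
Notation vec R n d := ('cV[R]_(n * d)).

Definition dotv (R : realType) (m : nat) (u v : 'cV[R]_m) : R :=
  \sum_(i < m) u i 0 * v i 0.
Definition sqnorm (R : realType) (m : nat) (u : 'cV[R]_m) : R := dotv u u.
Definition enorm (R : realType) (m : nat) (u : 'cV[R]_m) : R :=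
  Num.sqrt (sqnorm u).

Definition consensus (R : realType) (n d : nat) (x : vec R n d) : Prop :=
  forall (i i' : 'I_n) (j : 'I_d),
    x (mxvec_index i j) 0 = x (mxvec_index i' j) 0.

Definition is_gradient (R : realType) (m : nat)
  (F : 'cV[R]_m -> R) (gradF : 'cV[R]_m -> 'cV[R]_m) : Prop :=
  forall x, differentiable F x /\ forall h, 'd F x h = dotv (gradF x) h.

Definition strongly_convex (R : realType) (m : nat) (mu : R)
  (F : 'cV[R]_m -> R) : Prop :=
  forall (x y : 'cV[R]_m) (t : R), 0 <= t <= 1 ->
    F (t *: x + (1 - t) *: y) <=
      t * F x + (1 - t) * F y - mu / 2 * t * (1 - t) * sqnorm (x - y).

Definition L_smooth (R : realType) (m : nat) (L : R)
  (gradF : 'cV[R]_m -> 'cV[R]_m) : Prop :=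
  forall x y, enorm (gradF x - gradF y) <= L * enorm (x - y).

Definition rfun (R : realType) (m : nat) (mu : R) (F : 'cV[R]_m -> R) x : R :=
  F x - mu / 4 * sqnorm x.
Definition gradr (R : realType) (m : nat) (mu : R)
  (gradF : 'cV[R]_m -> 'cV[R]_m) x : 'cV[R]_m :=
  gradF x - (mu / 2) *: x.

Definition Dr (R : realType) (m : nat) (mu : R) (F : 'cV[R]_m -> R)
  (gradF : 'cV[R]_m -> 'cV[R]_m) (u v : 'cV[R]_m) : R :=
  rfun mu F u - rfun mu F v - dotv (gradr mu gradF v) (u - v).

Definition hfun (R : realType) (m : nat) (mu nu : R) (y z : 'cV[R]_m) : R :=
  mu^-1 * sqnorm (y + z) + nu / 2 * sqnorm y.
Definition grad_y_h (R : realType) (m : nat) (mu nu : R) (y z : 'cV[R]_m)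
  : 'cV[R]_m := (2 / mu) *: (y + z) + nu *: y.
Definition grad_z_h (R : realType) (m : nat) (mu : R) (y z : 'cV[R]_m)
  : 'cV[R]_m := (2 / mu) *: (y + z).

(* Main.v *)
Require Import Defs.
From HB Require Import structures.
From mathcomp Require Import all_boot all_order all_algebra.
From mathcomp Require Import all_classical all_reals all_analysis.
From mathcomp Require Import ring lra.
Import Order.TTheory GRing.Theory Num.Theory.
Local Open Scope ring_scope.

Module Aux.
Import numFieldNormedType.Exports.
Set Implicit Arguments. Unset Strict Implicit.
Local Open Scope classical_set_scope.
Local Open Scope ring_scope.
Section Dot.
Variables (R : realType) (m : nat).
Implicit Types u v w : 'cV[R]_m.

Lemma dotvC u v : dotv u v = dotv v u.
Proof. by apply: eq_bigr => i _; rewrite mulrC. Qed.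
Lemma dotvDl u v w : dotv (u + v) w = dotv u w + dotv v w.
Proof. by rewrite /dotv -big_split; apply: eq_bigr => i _; rewrite mxE mulrDl. Qed.
Lemma dotvNl u w : dotv (- u) w = - dotv u w.
Proof. by rewrite /dotv -sumrN; apply: eq_bigr => i _; rewrite mxE mulNr. Qed.
Lemma dotvZl a u w : dotv (a *: u) w = a * dotv u w.
Proof. by rewrite /dotv mulr_sumr; apply: eq_bigr => i _; rewrite mxE mulrA. Qed.
Lemma dotvDr u v w : dotv w (u + v) = dotv w u + dotv w v.
Proof. by rewrite dotvC dotvDl !(dotvC w). Qed.
Lemma dotvNr u w : dotv w (- u) = - dotv w u.
Proof. by rewrite dotvC dotvNl dotvC. Qed.
Lemma dotvZr a u w : dotv w (a *: u) = a * dotv w u.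
Proof. by rewrite dotvC dotvZl dotvC. Qed.
Lemma sqnorm_ge0 u : 0 <= sqnorm u.
Proof. by apply: sumr_ge0 => i _; rewrite -expr2 sqr_ge0. Qed.
Lemma enorm_sq u : enorm u ^+ 2 = sqnorm u.
Proof. by rewrite /enorm sqr_sqrtr // sqnorm_ge0. Qed.
End Dot.

Lemma line_derive (R : realType) (m : nat) (F : 'cV[R]_m -> R) (h v : 'cV[R]_m) (t0 : R) :
  differentiable F (t0 *: h + v) ->
  is_derive t0 1 (fun t : R => F (t *: h + v)) ('d F (t0 *: h + v) h).
Proof.
move=> dF.
have E : (fun s : R => s^-1 *: (((fun t : R => F (t *: h + v)) \o shift t0) (s *: 1) - F (t0 *: h + v)))
  = (fun s : R => s^-1 *: ((F \o shift (t0 *: h + v)) (s *: h) - F (t0 *: h + v))).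
  apply/funext => s /=; congr (_ *: (F _ - _)).
  by rewrite /shift /= [s%:A]mulr1 scalerDl addrA.
apply: DeriveDef.
  rewrite /derivable E; exact: diff_derivable.
by rewrite /derive E -/(derive F _ h) deriveE.
Qed.

Lemma mvt_line (R : realType) (m : nat) (F : 'cV[R]_m -> R) gF (h v : 'cV[R]_m) (a b s : R) :
  is_gradient F gF -> 0 < s ->
  exists2 c, 0 < c < s &
    (F (s *: h + v) - (a * s + b * (s * s))) - (F v) =
    (dotv (gF (c *: h + v)) h - (a + b * (c + c))) * s.
Proof.
move=> hg s0.
pose psi := (fun t : R => F (t *: h + v)) - (a \*: (@id R) + b \*: ((@id R) * (@id R))).
have hd : forall t : R, is_derive t 1 psi (dotv (gF (t *: h + v)) h - (a + b * (t + t))).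
  move=> t; have [dF dFe] := hg (t *: h + v).
  have h1 := @line_derive _ _ F h v t dF.
  have h2 : is_derive t (1:R) (a \*: (@id R) + b \*: ((@id R) * (@id R))) (a *: 1 + b *: (id t *: 1 + id t *: 1)).
    by apply: is_deriveD; apply: is_deriveZ.
  have := is_deriveB h1 h2.
  rewrite dFe /=.
  by rewrite /GRing.scale /= !mulr1.
have hc : {within [set` `[0, s]%R], continuous psi}.
  apply: derivable_within_continuous => x _; exact: (@ex_derive _ _ _ _ _ _ _ (hd x)).
have [c cI E] := @MVT R psi (fun t => dotv (gF (t *: h + v)) h - (a + b * (t + t))) 0 s s0
  (fun x _ => hd x) hc.
exists c; first by move: cI; rewrite in_itv.
have P : forall t, psi t = F (t *: h + v) - (a * t + b * (t * t)) by [].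
move: E; rewrite !P scale0r add0r !mulr0 addr0 !subr0 => <-.
by [].
Qed.

Section Bounds.
Variables (R : realType) (m : nat).
Implicit Types u v w a h : 'cV[R]_m.

Ltac dexp := rewrite ?(dotvDl, dotvDr, dotvNl, dotvNr, dotvZl, dotvZr).

Lemma dot_le (k : R) a h : 0 < k -> sqnorm a <= k ^+ 2 * sqnorm h ->
  dotv a h <= k * sqnorm h /\ - (k * sqnorm h) <= dotv a h.
Proof.
move=> k0 Ha.
have E1 := sqnorm_ge0 (a - k *: h).
have E2 := sqnorm_ge0 (a + k *: h).
move: E1 E2 Ha; rewrite /sqnorm; dexp; rewrite (dotvC h a) expr2 => E1 E2 Ha.
have : k * dotv a h <= k * (k * dotv h h) by nra.
have : k * (- (k * dotv h h)) <= k * dotv a h by nra.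
rewrite !ler_pM2l //; split => //.
Qed.

Lemma lip_sq (L : R) a h : 0 <= L -> enorm a <= L * enorm h -> sqnorm a <= L ^+ 2 * sqnorm h.
Proof.
move=> L0 H; rewrite -!enorm_sq.
have e0 : 0 <= enorm a by apply: sqrtr_ge0.
have e1 : 0 <= enorm h by apply: sqrtr_ge0.
nra.
Qed.
End Bounds.

Section DF.
Variables (R : realType) (m : nat) (F : 'cV[R]_m -> R) (gF : 'cV[R]_m -> 'cV[R]_m) (L mu : R).
Hypotheses (hg : is_gradient F gF) (hL : L_smooth L gF) (L0 : 0 < L).

Lemma grad_diff_bound (c : R) h v : 0 < c ->
  dotv (gF (c *: h + v) - gF v) h <= (L * c) * sqnorm h /\
  - ((L * c) * sqnorm h) <= dotv (gF (c *: h + v) - gF v) h.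
Proof.
move=> c0; apply: dot_le; first by rewrite mulr_gt0.
have := hL (c *: h + v) v; rewrite addrK => H.
have := lip_sq (ltW L0) H.
rewrite /sqnorm dotvZl dotvZr => H2.
apply: (le_trans H2); rewrite exprMn [c ^+ 2]expr2; rewrite le_eqVlt; apply/orP; left; apply/eqP; ring.
Qed.

Lemma DF_upper u v : F u - F v - dotv (gF v) (u - v) <= L / 2 * sqnorm (u - v).
Proof.
set h := u - v.
have [c /andP [c0 c1] E] := @mvt_line _ _ F gF h v (dotv (gF v) h) (L / 2 * sqnorm h) 1 hg ltr01.
have [B _] := grad_diff_bound h v c0.
have Hu : 1 *: h + v = u by rewrite scale1r /h subrK.
move: E; rewrite Hu !mulr1 => E.
have : dotv (gF (c *: h + v)) h - (dotv (gF v) h + L / 2 * sqnorm h * (c + c)) <= 0.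
  move: B; rewrite dotvDl dotvNl; nra.
lra.
Qed.

Hypothesis (hsc : strongly_convex mu F) (mu0 : 0 < mu).

Lemma DF_lower u v : mu / 2 * sqnorm (u - v) <= F u - F v - dotv (gF v) (u - v).
Proof.
set h := u - v.
set X := dotv (gF v) h + mu / 2 * sqnorm h - (F u - F v).
set K := (L + mu / 2) * sqnorm h.
have N0 : 0 <= sqnorm h by apply: sqnorm_ge0.
have K0 : 0 <= K by rewrite /K mulr_ge0 // addr_ge0 // ?ltW // divr_gt0.
have key : forall t, 0 < t -> t <= 1 -> X <= K * t.
  move=> t t0 t1.
  have [c /andP [c0 ct] E] := @mvt_line _ _ F gF h v 0 0 t hg t0.
  have [_ B] := grad_diff_bound h v c0.
  move: E; rewrite !mul0r !addr0 subr0 => E.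
  have tI : 0 <= t <= 1 by rewrite (ltW t0) t1.
  have Hs := hsc u v tI.
  have Ht : t *: u + (1 - t) *: v = t *: h + v.
    by rewrite /h scalerBr scalerBl scale1r addrA addrC addrA [- _ + _]addrC.
  rewrite Ht in Hs.
  move: B; rewrite dotvDl dotvNl => B.
  have Bc : - (L * t * sqnorm h) <= - (L * c * sqnorm h).
    by rewrite lerN2; apply: ler_wpM2r => //; apply: ler_wpM2l; [apply: ltW | apply: ltW].
  have : t * X <= t * (K * t).
    rewrite /X /K; nra.
  by rewrite ler_pM2l.
have : X <= 0.
  rewrite leNgt; apply/negP => XP.
  have XK : 0 < X + K by lra.
  have t0 : 0 < X / (X + K) by rewrite divr_gt0.
  have t1 : X / (X + K) <= 1 by rewrite ler_pdivrMr // mul1r; lra.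
  have := key _ t0 t1.
  rewrite mulrA ler_pdivlMr //.
  nra.
rewrite /X; lra.
Qed.
End DF.

Section Dr.
Variables (R : realType) (m : nat) (F : 'cV[R]_m -> R) (gF : 'cV[R]_m -> 'cV[R]_m) (L mu : R).
Hypotheses (hg : is_gradient F gF) (hL : L_smooth L gF) (L0 : 0 < L)
  (hsc : strongly_convex mu F) (mu0 : 0 < mu).
Implicit Types u v w : 'cV[R]_m.
Local Notation D := (Dr mu F gF).
Local Notation gr := (gradr mu gF).
Ltac dexp := rewrite ?(dotvDl, dotvDr, dotvNl, dotvNr, dotvZl, dotvZr).

Lemma Dr_DF u v : D u v = (F u - F v - dotv (gF v) (u - v)) - mu / 4 * sqnorm (u - v).
Proof.
rewrite /Dr /rfun /gradr /sqnorm; dexp; rewrite (dotvC v u).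
by field.
Qed.

Lemma Dr_lo u v : mu / 4 * sqnorm (u - v) <= D u v.
Proof.
rewrite Dr_DF; have := DF_lower hg hL L0 hsc mu0 u v.
have := sqnorm_ge0 (u - v); lra.
Qed.

Lemma Dr_ge0 u v : 0 <= D u v.
Proof. apply: le_trans (Dr_lo u v); apply: mulr_ge0; [apply: divr_ge0; [exact: ltW|by []] | exact: sqnorm_ge0]. Qed.

Lemma Dr_up u v : D u v <= L / 2 * sqnorm (u - v).
Proof.
rewrite Dr_DF; have := DF_upper hg hL L0 u v.
have : 0 <= mu / 4 * sqnorm (u - v) by apply: mulr_ge0; [apply: divr_ge0; [exact: ltW|by []] | exact: sqnorm_ge0].
lra.
Qed.

Lemma Dr3 u v w : dotv (gr v - gr w) (u - v) = D u w - D v w - D u v.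
Proof. rewrite /Dr /gradr; dexp; ring. Qed.

Lemma Dr_self u : D u u = 0.
Proof. by rewrite /Dr !subrr -(scale0r (0 : 'cV[R]_m)) dotvZr mul0r subrr. Qed.

Lemma Dr_coco u v : 1 / (2 * L) * sqnorm (gr v - gr u) <= D v u.
Proof.
set q := gr v - gr u.
set w0 := v - L^-1 *: q.
have E := Dr3 w0 v u.
have Hw : w0 - v = - (L^-1 *: q) by rewrite /w0 addrAC subrr add0r.
rewrite Hw -/q dotvNr dotvZr in E.
have H1 := Dr_ge0 w0 u.
have H2 := Dr_up w0 v.
rewrite Hw /sqnorm dotvNl dotvNr opprK !dotvZl !dotvZr in H2.
have N0 := sqnorm_ge0 q.
rewrite /sqnorm in N0 *.
have Li : L^-1 * L = 1 by rewrite mulVf // gt_eqF.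
have e1 : L / 2 * (L^-1 * (L^-1 * dotv q q)) = L^-1 * dotv q q / 2 by field; rewrite gt_eqF.
have e2 : 1 / (2 * L) * dotv q q = L^-1 * dotv q q / 2 by field; rewrite gt_eqF.
rewrite e2; rewrite e1 in H2; lra.
Qed.
End Dr.

Section Gen.
Variables (R : realType) (m : nat).
Implicit Types u v w a b c p d : 'cV[R]_m.
Ltac dexp := rewrite ?(dotvDl, dotvDr, dotvNl, dotvNr, dotvZl, dotvZr).

Lemma sqnormN v : sqnorm (- v) = sqnorm v.
Proof. by rewrite /sqnorm dotvNl dotvNr opprK. Qed.
Lemma sqnormZ (k : R) v : sqnorm (k *: v) = k ^+ 2 * sqnorm v.
Proof. by rewrite /sqnorm dotvZl dotvZr mulrA expr2. Qed.
Lemma sqn_split p d : sqnorm p = sqnorm (p - d) + 2 * dotv d p - sqnorm d.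
Proof. rewrite /sqnorm; dexp; rewrite (dotvC p d); ring. Qed.
Lemma sqn_diff u v : 2 * dotv (u - v) v = sqnorm u - sqnorm v - sqnorm (u - v).
Proof. rewrite /sqnorm; dexp; rewrite (dotvC v u); ring. Qed.
Lemma young3 a b c : sqnorm (a + b + c) <= 2 * sqnorm a + 4 * sqnorm b + 4 * sqnorm c.
Proof.
have E : 2 * sqnorm a + 4 * sqnorm b + 4 * sqnorm c - sqnorm (a + b + c)
   = sqnorm (a - b - c) + 2 * sqnorm (b - c).
  rewrite /sqnorm; dexp; rewrite (dotvC b a) (dotvC c a) (dotvC c b); ring.
have := sqnorm_ge0 (a - b - c); have := sqnorm_ge0 (b - c); lra.
Qed.
End Gen.

Lemma final_alg (R : realFieldType) (eta alpha tau L mu delta : R)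
  (nP nA nD dDP eP GP wP ne nEP Ge Gu0 Gu1 D0 D1 Dg Dsg D0g D1g ng nw : R) :
  0 < eta -> 0 < alpha -> alpha <= mu / 2 -> 0 < tau -> tau < 1 -> 0 < mu -> mu <= L ->
  eta <= (4 * tau * L)^-1 -> 0 <= delta -> delta <= 1 -> delta <= (2 * eta * L)^-1 ->
  nP = nA + 2 * dDP - nD ->
  dDP = eta * alpha * eP - eta * GP + eta * wP ->
  2 * eP = ne - nP - nEP ->
  tau * GP = tau * Ge + (1 - tau) * Gu0 + (2 - tau) / 2 * Gu1 ->
  Gu0 = - (D0 - Dg - D0g) ->
  Gu1 = D1 - Dg - D1g ->
  Ge = Dg + Dsg ->
  D1g <= L / 2 * ((2 * tau / (2 - tau)) ^+ 2 * nD) ->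
  nw <= 2 * (eta^-1 ^+ 2 * nD) + 4 * (alpha ^+ 2 * nEP) + 4 * ng ->
  mu / 4 * ne <= Dg -> mu / 4 * ne <= Dsg -> 1 / (2 * L) * ng <= Dsg -> 0 <= D0g ->
  0 <= ne -> 0 <= nP -> 0 <= nD -> 0 <= nEP -> 0 <= ng ->
  eta^-1 * nP <=
      eta^-1 * nA
      - (3 * alpha / 4) * nP
      + (2 * (1 - tau) / tau) * D0
      - ((2 - tau) / tau) * D1
      - (eta * delta / 4) * nw
      + 2 * wP.
Proof.
move=> e0 a0 amu t0 t1 mu0 muL etaL d0 d1 dL S1 S2 S3 S4 T0 T1 Te B1 Y Lg Lsg Csg P0g
  ne0 nP0 nD0 nEP0 ng0.
have L0 : 0 < L by apply: (lt_le_trans mu0 muL).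
have t2 : 0 < 2 - tau by lra.
set c1 := (2 - tau) / tau.
set c0 := 2 * (1 - tau) / tau.
set Q := eta^-1 * nD - alpha * ne + alpha / 4 * nP + alpha * nEP + Dg + 2 * Dsg
   + c0 * D0g - c1 * D1g - eta * delta / 4 * nw.
suff [HQ Q0] : (eta^-1 * nA - (3 * alpha / 4) * nP + c0 * D0 - c1 * D1
      - (eta * delta / 4) * nw + 2 * wP) - eta^-1 * nP = Q /\ 0 <= Q by lra.
split.
  have GPe : GP = tau^-1 * (tau * Ge + (1 - tau) * Gu0 + (2 - tau) / 2 * Gu1).
    by rewrite -S4 mulrA mulVf ?mul1r // gt_eqF.
  have ePe : eP = (ne - nP - nEP) / 2 by rewrite -S3; field.
  have nAe : nA = nP - 2 * dDP + nD by rewrite S1; ring.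
  rewrite /Q /c0 /c1 nAe S2 GPe ePe T0 T1 Te.
  by field; rewrite !gt_eqF.
have c1ge : 1 <= c1 by rewrite /c1 ler_pdivlMr // mul1r; lra.
have c0ge : 0 <= c0 by rewrite /c0 divr_ge0 //; lra.
have t2ge : 2 <= 2 / tau by rewrite ler_pdivlMr //; lra.
set ie := eta^-1.
have ie0 : 0 < ie by rewrite invr_gt0.
have eie : eta * ie = 1 by rewrite mulfV // gt_eqF.
have tL : 2 * tau * L <= ie / 2.
  have : eta * (4 * tau * L) <= 1.
    by rewrite -ler_pdivlMr ?mul1r // ?mulr_gt0 //; lra.
  nra.
have h1 : c1 * D1g <= ie / 2 * nD.
  have E : c1 * (L / 2 * ((2 * tau / (2 - tau)) ^+ 2 * nD)) = (2 * tau * L / (2 - tau)) * nD.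
    by rewrite /c1; field; rewrite !gt_eqF.
  have : 2 * tau * L / (2 - tau) <= 2 * tau * L.
    rewrite ler_pdivrMr //; have : 0 < 2 * tau * L by rewrite !mulr_gt0.
    nra.
  have c10 : 0 <= c1 by lra.
  have := ler_wpM2l c10 B1; rewrite E.
  nra.
have h2 : Dg + 2 * Dsg <= c1 * Dg + 2 / tau * Dsg.
  have Dg0 : 0 <= Dg by apply: le_trans Lg; rewrite mulr_ge0 // divr_ge0 //; lra.
  have Ds0 : 0 <= Dsg by apply: le_trans Lsg; rewrite mulr_ge0 // divr_ge0 //; lra.
  nra.
have h3 : 0 <= c0 * D0g by rewrite mulr_ge0.
have ed0 : 0 <= eta * delta by rewrite mulr_ge0 // ltW.
have ed1 : eta * delta <= 1 / (2 * L).
  have : eta * delta <= eta * (2 * eta * L)^-1 by rewrite ler_wpM2l // ltW.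
  have -> : eta * (2 * eta * L)^-1 = 1 / (2 * L) by field; rewrite !gt_eqF.
  done.
have h4 : eta * delta / 4 * nw <= ie / 2 * nD + alpha * nEP + 1 / (2 * L) * ng.
  have E1 : eta * delta / 4 * (2 * (ie ^+ 2 * nD) + 4 * (alpha ^+ 2 * nEP) + 4 * ng)
     = delta * ie / 2 * nD + (eta * delta) * alpha ^+ 2 * nEP + (eta * delta) * ng.
    by rewrite /ie; field; rewrite gt_eqF.
  have A1 : eta * delta / 4 * nw <= eta * delta / 4 * (2 * (ie ^+ 2 * nD) + 4 * (alpha ^+ 2 * nEP) + 4 * ng).
    by rewrite ler_wpM2l // divr_ge0.
  rewrite E1 in A1.
  have A2 : delta * ie / 2 * nD <= ie / 2 * nD.
    have : 0 <= ie / 2 * nD by rewrite mulr_ge0 // divr_ge0 // ltW.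
    have : delta * ie / 2 * nD = delta * (ie / 2 * nD) by ring.
    nra.
  have A3 : (eta * delta) * alpha ^+ 2 * nEP <= alpha * nEP.
    have aL : alpha <= 2 * L by lra.
    have : (eta * delta) * alpha ^+ 2 <= 1 / (2 * L) * alpha ^+ 2.
      by rewrite ler_wpM2r // sqr_ge0.
    have : 1 / (2 * L) * alpha ^+ 2 <= alpha.
      rewrite mul1r -[leRHS]mul1r ler_pdivrMl ?mulr_gt0 // expr2; nra.
    move=> Y1 Y2; apply: ler_wpM2r => //; exact: le_trans Y2 Y1.
  have A4 : (eta * delta) * ng <= 1 / (2 * L) * ng by rewrite ler_wpM2r.
  lra.
rewrite /Q -/ie.
nra.
Qed.

End Aux.
Import Aux.
Unset Implicit Arguments. Set Strict Implicit.

Theorem mainTheorem10 (R : realType) (n d : nat) (mu L : R)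
  (F : 'cV[R]_(n * d) -> R) (gradF : 'cV[R]_(n * d) -> 'cV[R]_(n * d))
  (W : 'M[R]_(n * d))
  (xs : 'cV[R]_(n * d))
  (eta theta lambda alpha beta gamma nu tau sigma : R)
  (x y z xf yf zf xg yg zg : nat -> 'cV[R]_(n * d)) :
  (* standing assumptions on F *)
  0 < mu -> mu <= L ->
  is_gradient F gradF ->
  strongly_convex mu F ->
  L_smooth L gradF ->
  (* W symmetric positive semidefinite with kernel = consensus space *)
  W^T = W ->
  (forall v : 'cV[R]_(n * d), 0 <= (v^T *m W *m v) 0 0) ->
  (forall v : 'cV[R]_(n * d), W *m v = 0 <-> consensus v) ->
  (* x* is the unique minimizer of F over ker W *)
  W *m xs = 0 ->
  (forall v, W *m v = 0 -> F xs <= F v) ->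
  (forall v, W *m v = 0 -> (forall w, W *m w = 0 -> F v <= F w) -> v = xs) ->
  (* parameters *)
  0 < eta -> 0 < theta -> 0 < lambda -> 0 < alpha -> 0 < beta ->
  0 < gamma -> 0 < nu -> 0 < tau < 1 -> 0 < sigma < 1 ->
  (* initialization *)
  (exists w, z 0%N = W *m w) ->
  xf 0%N = x 0%N -> yf 0%N = y 0%N -> zf 0%N = z 0%N ->
  (* Algorithm 3 *)
  (forall k, xg k = tau *: x k + (1 - tau) *: xf k) ->
  (forall k, yg k = sigma *: y k + (1 - sigma) *: yf k) ->
  (forall k, zg k = sigma *: z k + (1 - sigma) *: zf k) ->
  (forall k, x k.+1 = x k + (eta * alpha) *: (xg k - x k.+1)
                       - eta *: gradr mu gradF (xg k) + eta *: y k.+1) ->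
  (forall k, y k.+1 = y k + (theta * beta) *: (yg k - y k.+1)
                       - theta *: grad_y_h mu nu (yg k) (zg k)
                       + (theta * nu) *: y k.+1 - theta *: x k.+1) ->
  (forall k, z k.+1 = z k + (lambda * gamma) *: (zg k - z k.+1)
                       - lambda *: (W *m grad_z_h mu (yg k) (zg k))) ->
  (forall k, xf k.+1 = xg k + (2 * tau / (2 - tau)) *: (x k.+1 - x k)) ->
  (forall k, yf k.+1 = yg k + sigma *: (y k.+1 - y k)) ->
  (forall k, zf k.+1 = zg k + sigma *: (z k.+1 - z k)) ->
  (* hypotheses of the theorem *)
  alpha <= mu / 2 ->
  eta <= (4 * tau * L)^-1 ->
  let delta := Num.min 1 ((2 * eta * L)^-1) in
  let ys := gradF xs - (mu / 2) *: xs in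
  forall k : nat,
    eta^-1 * sqnorm (x k.+1 - xs) <=
      eta^-1 * sqnorm (x k - xs)
      - (3 * alpha / 4) * sqnorm (x k.+1 - xs)
      + (2 * (1 - tau) / tau) * Dr mu F gradF (xf k) xs
      - ((2 - tau) / tau) * Dr mu F gradF (xf k.+1) xs
      - (eta * delta / 4) * sqnorm (y k.+1 - ys)
      + 2 * dotv (y k.+1 - ys) (x k.+1 - xs).
Proof.
move=> mu0 muL hg hsc hL _ _ _ _ _ _ e0 _ _ a0 _ _ _ /andP [t0 t1] _ _ _ _ _
  hxg _ _ hx _ _ hxf _ _ amu etaL delta ys k.
have L0 : 0 < L by apply: lt_le_trans mu0 muL.
set gr := gradr mu gradF.
have Eys : ys = gr xs by [].
set A := x k - xs. set P := x k.+1 - xs. set Dv := x k.+1 - x k.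
set e := xg k - xs. set G := gr (xg k) - ys. set w := y k.+1 - ys.
have ie0 : eta != 0 by rewrite gt_eqF.
have t2 : 2 - tau != 0 by rewrite subr_eq0; apply/eqP => E; move: t1; rewrite -E; lra.
have VD : Dv = (eta * alpha) *: (e - P) - eta *: G + eta *: w.
  apply/matrixP => i j; have := congr1 (fun M : 'cV[R]_(n * d) => M i j) (hx k); rewrite !mxE => Hc.
  have Hd : x k.+1 i j - x k i j = eta * alpha * (xg k i j - x k.+1 i j)
      - eta * (gradF (xg k) i j - mu / 2 * xg k i j) + eta * y k.+1 i j.
    by rewrite {1}Hc; ring.
  rewrite /Dv /e /P /G /w ?mxE Hd; ring.
have VW : w = eta^-1 *: Dv - alpha *: (e - P) + G.
  apply/matrixP => i0 j0; have := congr1 (fun M : 'cV[R]_(n * d) => M i0 j0) VD.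
  rewrite !mxE => Hc.
  rewrite [X in _ = eta^-1 * X + _ + _]Hc; by field.
have VP : tau *: P = tau *: e + (1 - tau) *: (xg k - xf k) + ((2 - tau) / 2) *: (xf k.+1 - xg k).
  apply/matrixP => i j; have := congr1 (fun M : 'cV[R]_(n * d) => M i j) (hxf k); rewrite !mxE => Hf.
  have := congr1 (fun M : 'cV[R]_(n * d) => M i j) (hxg k); rewrite !mxE => Hg.
  rewrite /P /e ?mxE Hf Hg; by field.
have VF : xf k.+1 - xg k = (2 * tau / (2 - tau)) *: Dv.
  by rewrite hxf addrAC subrr add0r.
have Dup := Dr_up hg hL L0 mu0.
have Dlo := Dr_lo hg hL L0 hsc mu0.
have Dco := Dr_coco hg hL L0 hsc mu0.
have Dge := Dr_ge0 hg hL L0 hsc mu0.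
have dl0 : 0 <= delta.
  by rewrite /delta le_min ler01 invr_ge0 !mulr_ge0 // ltW.
have dl1 : delta <= 1 by rewrite /delta ge_min lexx.
have dl2 : delta <= (2 * eta * L)^-1 by rewrite /delta ge_min lexx orbT.
have S1 : sqnorm P = sqnorm A + 2 * dotv Dv P - sqnorm Dv.
  have PA : P - Dv = A.
    by rewrite /P /Dv /A; apply/matrixP => i0 j0; rewrite !mxE; ring.
  by rewrite {1}(sqn_split P Dv) PA.
have S2 : dotv Dv P = eta * alpha * dotv (e - P) P - eta * dotv G P + eta * dotv w P.
  by rewrite {1}VD; rewrite ?(dotvDl, dotvDr, dotvNl, dotvNr, dotvZl, dotvZr); ring.
have S3 := sqn_diff e P.
have S4 : tau * dotv G P = tau * dotv G e + (1 - tau) * dotv G (xg k - xf k)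
    + (2 - tau) / 2 * dotv G (xf k.+1 - xg k).
  rewrite -(dotvZr tau P G) VP.
  by rewrite ?(dotvDl, dotvDr, dotvNl, dotvNr, dotvZl, dotvZr); ring.
have T0 : dotv G (xg k - xf k) = - (Dr mu F gradF (xf k) xs - Dr mu F gradF (xg k) xs
    - Dr mu F gradF (xf k) (xg k)).
  by rewrite -(Dr3 F gradF mu (xf k) (xg k) xs) -dotvNr (opprB (xf k) (xg k)).
have T1 : dotv G (xf k.+1 - xg k) = Dr mu F gradF (xf k.+1) xs - Dr mu F gradF (xg k) xs
    - Dr mu F gradF (xf k.+1) (xg k).
  by rewrite -(Dr3 F gradF mu (xf k.+1) (xg k) xs).
have Te : dotv G e = Dr mu F gradF (xg k) xs + Dr mu F gradF xs (xg k).
  have := Dr3 F gradF mu xs (xg k) xs.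
  rewrite Dr_self -[xs - xg k]opprB dotvNr => H.
  have : dotv G e = dotv (gradr mu gradF (xg k) - gradr mu gradF xs) (xg k - xs) by [].
  lra.
have B1 : Dr mu F gradF (xf k.+1) (xg k) <= L / 2 * ((2 * tau / (2 - tau)) ^+ 2 * sqnorm Dv).
  by have := Dup (xf k.+1) (xg k); rewrite VF sqnormZ.
have Y : sqnorm w <= 2 * (eta^-1 ^+ 2 * sqnorm Dv) + 4 * (alpha ^+ 2 * sqnorm (e - P))
    + 4 * sqnorm G.
  by rewrite VW; have := young3 (eta^-1 *: Dv) (- (alpha *: (e - P))) G;
    rewrite sqnormN !sqnormZ.
have Lg := Dlo (xg k) xs.
have Lsg : mu / 4 * sqnorm e <= Dr mu F gradF xs (xg k).
  by have := Dlo xs (xg k); rewrite -opprB sqnormN.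
have Csg : 1 / (2 * L) * sqnorm G <= Dr mu F gradF xs (xg k).
  have := Dco (xg k) xs.
  have -> : sqnorm G = sqnorm (gradr mu gradF xs - gradr mu gradF (xg k)).
    by rewrite -sqnormN opprB.
  done.
have P0g := Dge (xf k) (xg k).
have FA := (final_alg (R := R) (eta := eta) (alpha := alpha) (tau := tau) (delta := delta)
   (L := L) (mu := mu) (nD := sqnorm Dv) (nA := sqnorm A) (dDP := dotv Dv P)
   (eP := dotv (e - P) P) (GP := dotv G P)
   (ne := sqnorm e) (nEP := sqnorm (e - P)) (Ge := dotv G e) (Gu0 := dotv G (xg k - xf k))
   (Gu1 := dotv G (xf k.+1 - xg k)) (Dg := Dr mu F gradF (xg k) xs)
   (Dsg := Dr mu F gradF xs (xg k)) (D0g := Dr mu F gradF (xf k) (xg k))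
   (D1g := Dr mu F gradF (xf k.+1) (xg k)) (ng := sqnorm G) (nw := sqnorm w) (nP := sqnorm P)
   (wP := dotv w P) (D0 := Dr mu F gradF (xf k) xs) (D1 := Dr mu F gradF (xf k.+1) xs)).
apply: (FA e0 a0 amu t0 t1 mu0 muL etaL dl0 dl1 dl2 S1 S2 S3 S4 T0 T1 Te B1 Y Lg Lsg Csg P0g);
  exact: sqnorm_ge0.
Qed.
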